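(* There is an absolute constant $c>0$ such that for every celebrity game $\Gamma=\langle V,(w_u)_{u\in V},\alpha,\beta\rangle$ with $\beta>1$ that has a Nash equilibrium whose outcome graph is 2-edge-connected, and for every Nash equilibrium $S$ of $\Gamma$ whose outcome graph $G[S]$ is 2-edge-connected, we have $C(S)/\mathrm{opt}(\Gamma)\le c\,n/\beta$, where $n=|V|$.
   Context: A celebrity game $\Gamma=\langle V,(w_u)_{u\in V},\alpha,\beta\rangle$ consists of a set of players $V=\{1,\dots,n\}$, celebrity weights $w_u>0$, a link cost $\alpha>0$ and a critical distance $\beta$ with $1\le\beta\le n-1$. A strategy of player $u$ is a set $S_u\subseteq V\setminus\{u\}$; a strategy profile is $S=(S_1,\dots,S_n)$; its outcome graph $G[S]$ is the undirected graph on $V$ with edge set $\{\{u,v\}: u\in S_v\text{ or }v\in S_u\}$. With $d_G$ the graph distance (infinite between different connected components), the cost of player $u$ is $c_u(S)=\alpha|S_u|+\sum_{v:\,d_{G[S]}(u,v)>\beta}w_v$ and the social cost is $C(S)=\sum_{u\in V}c_u(S)$. $S$ is a Nash equilibrium if no player can strictly decrease its cost by changing only its own strategy. $\mathrm{opt}(\Gamma)=\min_S C(S)$ over all strategy profiles. *)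

(* Defs.v *)
From HB Require Import structures.
From mathcomp Require Import all_boot all_order all_algebra.
Set Implicit Arguments. Unset Strict Implicit. Unset Printing Implicit Defensive.
Import Order.TTheory GRing.Theory Num.Theory.
Local Open Scope ring_scope.

Definition profile (n : nat) := {ffun 'I_n -> {set 'I_n}}.

Definition valid n (S : profile n) : bool := [forall u, u \notin S u].

Definition adj n (S : profile n) : rel 'I_n :=
  fun u v => (u != v) && ((v \in S u) || (u \in S v)).

Fixpoint ball n (S : profile n) (k : nat) (u : 'I_n) : {set 'I_n} :=
  match k with
  | 0 => [set u]
  | k'.+1 => ball S k' u :|: [set v | [exists x in ball S k' u, adj S x v]]
  end.

Definition cost (R : realFieldType) n (w : 'I_n -> R) (alpha : R) (beta : nat)
  (S : profile n) (u : 'I_n) : R :=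
  alpha * (#|S u|)%:R + \sum_(v | v \notin ball S beta u) w v.

Definition social_cost (R : realFieldType) n (w : 'I_n -> R) (alpha : R) (beta : nat)
  (S : profile n) : R := \sum_u cost w alpha beta S u.

Definition deviate n (S : profile n) (u : 'I_n) (T : {set 'I_n}) : profile n :=
  [ffun v => if v == u then T else S v].

Definition nash (R : realFieldType) n (w : 'I_n -> R) (alpha : R) (beta : nat)
  (S : profile n) : Prop :=
  valid S /\ forall (u : 'I_n) (T : {set 'I_n}), u \notin T ->
    cost w alpha beta S u <= cost w alpha beta (deviate S u T) u.

Definition empty_profile n : profile n := [ffun=> set0].

Definition opt (R : realFieldType) n (w : 'I_n -> R) (alpha : R) (beta : nat) : R :=
  \big[Order.min/social_cost w alpha beta (empty_profile n)]_(S : profile n | valid S)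
     social_cost w alpha beta S.

Definition connected_rel n (e : rel 'I_n) : Prop := forall u v, connect e u v.

Definition remove_edge n (e : rel 'I_n) (a b : 'I_n) : rel 'I_n :=
  fun u v => e u v && ~~ (((u == a) && (v == b)) || ((u == b) && (v == a))).

Definition two_edge_connected n (e : rel 'I_n) : Prop :=
  connected_rel e /\ forall a b, e a b -> connected_rel (remove_edge e a b).

(* Main.v *)
Require Import Defs.
From HB Require Import structures.
From mathcomp Require Import all_boot all_order all_algebra.
From mathcomp Require Import zify ring lra.
Import Order.TTheory GRing.Theory Num.Theory.
Set Implicit Arguments. Unset Strict Implicit. Unset Printing Implicit Defensive.

Fixpoint ballr n (e : rel 'I_n) (k : nat) (u : 'I_n) : {set 'I_n} :=
  match k with
  | 0 => [set u]
  | k'.+1 => ballr e k' u :|: [set v | [exists x in ballr e k' u, e x v]]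
  end.

Lemma ballE n (S : profile n) k u : ball S k u = ballr (adj S) k u.
Proof. by elim: k => //= k ->. Qed.

Lemma ballr_self n (e : rel 'I_n) k u : u \in ballr e k u.
Proof. by elim: k => [|k IH] /=; rewrite ?set11 // in_setU IH. Qed.

Lemma ballrS n (e : rel 'I_n) k u : {subset ballr e k u <= ballr e k.+1 u}.
Proof. by move=> x /= H; rewrite in_setU H. Qed.

Lemma ballr_mono n (e : rel 'I_n) k m u : (k <= m)%N -> {subset ballr e k u <= ballr e m u}.
Proof.
move=> /subnK <-; elim: (m - k)%N => // j IH x /IH; rewrite addSn; exact: ballrS.
Qed.

Lemma ballr_step n (e : rel 'I_n) k u x y :
  x \in ballr e k u -> e x y -> y \in ballr e k.+1 u.
Proof.
by move=> Hx Hxy /=; rewrite in_setU; apply/orP; right; rewrite inE; apply/existsP; exists x; rewrite Hx.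
Qed.

Lemma ballr_sub n (e e' : rel 'I_n) k u : subrel e e' -> {subset ballr e k u <= ballr e' k u}.
Proof.
move=> ee'; elim: k => [|k IH] //= x; rewrite !in_setU => /orP[/IH->//|].
rewrite inE => /existsP[y /andP[/IH Hy /ee' Hyx]].
by apply/orP; right; rewrite inE; apply/existsP; exists y; rewrite Hy.
Qed.

Lemma ballr_trans n (e : rel 'I_n) a b u y z :
  y \in ballr e a u -> z \in ballr e b y -> z \in ballr e (a + b) u.
Proof.
move=> Hy; elim: b z => [|b IH] z /=.
  by rewrite inE addn0 => /eqP ->.
rewrite in_setU addnS => /orP[/IH/ballrS //|].
rewrite inE => /existsP[x /andP[/IH Hx Hxz]]; exact: ballr_step Hx Hxz.
Qed.

Lemma ballr_split n (e : rel 'I_n) a b u z :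
  z \in ballr e (a + b) u -> exists2 y, y \in ballr e a u & z \in ballr e b y.
Proof.
elim: b z => [|b IH] z; first by rewrite addn0 => H; exists z => //; rewrite /= set11.
rewrite addnS /= in_setU => /orP[/IH [y Hy Hz]|]; first by exists y => //; apply: ballrS.
rewrite inE => /existsP[x /andP[/IH [y Hy Hx] Hxz]]; exists y => //; exact: ballr_step Hx Hxz.
Qed.

Lemma ballr_connect n (e : rel 'I_n) k u z : z \in ballr e k u -> connect e u z.
Proof.
elim: k z => [|k IH] z /=; first by rewrite inE => /eqP ->.
rewrite in_setU => /orP[/IH //|]; rewrite inE => /existsP[x /andP[/IH Hx Hxz]].
exact: connect_trans Hx (connect1 Hxz).
Qed.

Lemma path_ballr n (e : rel 'I_n) u p : path e u p -> last u p \in ballr e (size p) u.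
Proof.
elim/last_ind: p => [|p z IH] /=; first by rewrite set11.
rewrite rcons_path last_rcons size_rcons => /andP[/IH H1 H2]; exact: ballr_step H1 H2.
Qed.

Lemma connect_ballr n (e : rel 'I_n) u z : connect e u z -> z \in ballr e n u.
Proof.
move=> /connectP[p Hp ->]; case: (shortenP Hp) => p' Hp' Hu _.
apply: (ballr_mono _ (path_ballr Hp')).
move/card_uniqP: (Hu) => Hs.
have := max_card (mem (u :: p')); rewrite Hs card_ord /=; lia.
Qed.

Definition ep n (S : profile n) (u : 'I_n) : rel 'I_n :=
  fun x y => adj S x y && (x != u) && (y != u).

Definition cmp n (S : profile n) u x := [set z | connect (ep S u) x z].

Lemma adj_sym n (S : profile n) : symmetric (adj S).
Proof. by move=> x y; rewrite /adj eq_sym orbC. Qed.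

Lemma ep_sym n (S : profile n) u : symmetric (ep S u).
Proof. by move=> x y; rewrite /ep adj_sym; case: (x != u); case: (y != u); rewrite ?andbT ?andbF. Qed.

Lemma ep_connect_sym n (S : profile n) u : connect_sym (ep S u).
Proof. exact/sym_connect_sym/ep_sym. Qed.

Lemma ep_sub n (S : profile n) u : subrel (ep S u) (adj S).
Proof. by move=> x y /andP[/andP[]]. Qed.

Lemma ep_eq n (S S' : profile n) u : (forall x, x != u -> S' x = S x) -> ep S' u =2 ep S u.
Proof.
move=> H x y; rewrite /ep /adj.
case: (eqVneq x u) => [->|xu]; first by rewrite andbF [in RHS]andbF.
case: (eqVneq y u) => [->|yu]; first by rewrite !andbF.
by rewrite !H.
Qed.

Lemma deviate_other n (S : profile n) u T x : x != u -> deviate S u T x = S x.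
Proof. by rewrite /deviate ffunE => /negPf ->. Qed.

Lemma deviate_self n (S : profile n) u T : deviate S u T u = T.
Proof. by rewrite /deviate ffunE eqxx. Qed.

Lemma connect_ep_neq n (S : profile n) u x y : connect (ep S u) x y -> x != u -> y != u.
Proof.
move=> /connectP[p Hp ->]; elim/last_ind: p Hp => [|p z _] //=.
by rewrite rcons_path last_rcons => /andP[_ /andP[_]].
Qed.

Lemma path_ep n (S : profile n) u y q :
  path (adj S) y q -> u \notin y :: q -> forall z, z \in y :: q -> connect (ep S u) y z.
Proof.
elim: q y => [|a q IH] y /=.
  by move=> _ _ z; rewrite inE => /eqP ->.
move=> /andP[Hya Hq] Hu z.
have Huq : u \notin a :: q by apply: contra Hu; rewrite [u \in y :: _]inE => ->; rewrite orbT.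
have uy : y != u by apply: contraNneq Hu => <-; rewrite mem_head.
have ua : a != u by apply: contraNneq Huq => <-; rewrite mem_head.
have Hya' : ep S u y a by rewrite /ep Hya uy ua.
rewrite inE => /orP[/eqP ->|Hz]; first exact: connect0.
apply: connect_trans (connect1 Hya') (IH _ Hq Huq z Hz).
Qed.

Lemma path_lemma n (S : profile n) u x :
  x != u -> connect (adj S) u x -> x \in ballr (adj S) #|cmp S u x| u.
Proof.
move=> + /connectP[p Hp ->]; case: (shortenP Hp) => p' Hp' Hu _ xu.
case: p' Hp' Hu xu => [|y q] /=; first by move=> *; rewrite ballr_self.
move=> /andP[Huy Hq] /andP[Hu Huq] _.
have Hc := path_ep Hq Hu.
have Hx : last y q \in y :: q by exact: mem_last.
have Hsub : {subset y :: q <= enum (cmp S u (last y q))}.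
  move=> z Hz; rewrite mem_enum inE.
  apply: connect_trans _ (Hc z Hz); rewrite ep_connect_sym; exact: Hc _ Hx.
have := uniq_leq_size (Huq : uniq (y :: q)) Hsub; rewrite -cardE => Hle.
apply: (ballr_mono Hle); apply: (path_ballr (e := adj S) (u := u) (p := y :: q)).
by rewrite /= Huy.
Qed.

Lemma outside_lemma n (S S' : profile n) u (A : {set 'I_n}) :
  u \notin A -> (forall y z, y \in A -> ep S u y z -> z \in A) ->
  (forall x, x != u -> S' x = S x) ->
  (forall x, x \notin A -> (x \in S' u) = (x \in S u)) ->
  forall k x, x \in ballr (adj S) k u -> x \notin A -> x \in ballr (adj S') k u.
Proof.
move=> uA clA HS HSu; elim=> [|k IH] x //=.
rewrite !in_setU => /orP[/IH H xA|]; first by rewrite H.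
rewrite inE => /existsP[y /andP[Hy Hyx]] xA.
case: (eqVneq x u) => [->|xu]; first by rewrite ballr_self.
case: (boolP (y \in A)) => yA.
  have : ep S u y x by rewrite /ep Hyx xu andbT; apply: contraNneq uA => <-.
  by move/(clA _ _ yA); rewrite (negPf xA).
have Hy' := IH _ Hy yA.
apply/orP; right; rewrite inE; apply/existsP; exists y; rewrite Hy' /=.
case: (eqVneq y u) => [eyu|yu].
  move: Hyx; rewrite /adj eyu => /andP[-> /orP[H|H]] /=.
    by rewrite HSu // H.
  by rewrite (HS x xu) H orbT.
by apply: (ep_sub (S := S') (u := u)); rewrite (ep_eq (S := S) HS) /ep Hyx xu yu.
Qed.

Definition lg n (S : profile n) u beta x := (x != u) && (beta < #|cmp S u x|)%N.
Definition rt n (S : profile n) u x := fingraph.root (ep S u) x.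
Definition lvlP n (S : profile n) u x : pred nat :=
  fun k => (x \in ballr (ep S u) k (rt S u x)) || (k == n.+1).
Lemma lvl_ex n (S : profile n) u x : exists k, lvlP S u x k.
Proof. by exists n.+1; rewrite /lvlP eqxx orbT. Qed.
Definition lvl n (S : profile n) u x := ex_minn (lvl_ex S u x).
Definition Dset n (S : profile n) u beta i :=
  [set y | lg S u beta y && ((y == rt S u y) || (lvl S u y %% beta == i))].

Lemma comp_eq n (S : profile n) u a b : connect (ep S u) a b -> cmp S u a = cmp S u b.
Proof. by move=> H; apply/setP => t; rewrite !inE (same_connect (ep_connect_sym S u) H). Qed.

Lemma lvl_in n (S : profile n) u x : x \in ballr (ep S u) (lvl S u x) (rt S u x).
Proof.
rewrite /lvl; case: ex_minnP => m; rewrite /lvlP => /orP[//|/eqP ->] Hmin.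
have H : x \in ballr (ep S u) n (rt S u x).
  by apply: connect_ballr; rewrite ep_connect_sym; apply: connect_root.
have := Hmin n; rewrite /lvlP H => /(_ isT); lia.
Qed.

Lemma lvl_min n (S : profile n) u x k : x \in ballr (ep S u) k (rt S u x) -> (lvl S u x <= k)%N.
Proof. by move=> H; rewrite /lvl; case: ex_minnP => m _ Hmin; apply: Hmin; rewrite /lvlP H. Qed.

Lemma rt_eq n (S : profile n) u a b : connect (ep S u) a b -> rt S u a = rt S u b.
Proof. by move/(fingraph.rootP (ep_connect_sym S u)). Qed.

Lemma cover_lemma n (S : profile n) u beta (i : nat) x :
  (i < beta)%N -> lg S u beta x ->
  exists2 y, y \in Dset S u beta i & x \in ballr (ep S u) beta.-1 y.
Proof.
move=> ib /andP[xu Hx].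
have sym := ep_connect_sym S u.
set r := rt S u x; set d := lvl S u x.
have Hd : x \in ballr (ep S u) d r by exact: lvl_in.
have Hxr : connect (ep S u) x r by exact: connect_root.
have Hrr : rt S u r = r by rewrite /r /rt fingraph.root_root.
have lgy : forall y, connect (ep S u) r y -> lg S u beta y.
  move=> y Hy; have Hxy := connect_trans Hxr Hy.
  by rewrite /lg (connect_ep_neq Hxy xu) -(comp_eq Hxy).
have [dlt|dge] := ltnP d beta.
  exists r; first by rewrite inE lgy ?connect0 // Hrr eqxx.
  by apply: ballr_mono Hd; lia.
set m := ((d - i) %% beta)%N; set d' := (d - m)%N.
have Hdd : d = (d' + m)%N by rewrite /d' /m; lia.
have Hd'mod : (d' %% beta = i)%N.
  rewrite /d' /m; have := divn_eq (d - i) beta; rewrite -/m => E.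
  have -> : (d - m = (d - i) %/ beta * beta + i)%N by lia.
  by rewrite modnMDl modn_small.
have mlt : (m < beta)%N by rewrite /m ltn_mod; lia.
rewrite Hdd in Hd; have [y Hy Hxy] := ballr_split Hd.
have Hry := ballr_connect Hy.
have Hrty : rt S u y = r by rewrite -(rt_eq Hry) Hrr.
have Hly : lvl S u y = d'.
  apply/eqP; rewrite eqn_leq lvl_min ?Hrty //=; rewrite leqNgt; apply/negP => Hlt.
  have Hy2 := lvl_in S u y; rewrite Hrty in Hy2.
  have := lvl_min (ballr_trans Hy2 Hxy); rewrite -/d; lia.
exists y; first by rewrite inE lgy // Hly Hd'mod eqxx orbT.
by apply: ballr_mono Hxy; lia.
Qed.

Lemma sum_bool_card (I : finType) (P : pred I) : (\sum_(i : I) (P i : nat) = #|P|)%N.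
Proof. by rewrite -sum1_card [RHS]big_mkcond; apply: eq_bigr => i _; rewrite unfold_in; case: (P i). Qed.

Lemma sum_le1 (I : finType) (P : pred I) :
  (forall a b, P a -> P b -> a = b) -> (\sum_(i : I) (P i : nat) <= 1)%N.
Proof.
move=> H; rewrite sum_bool_card; apply/card_le1_eqP => a b Ha Hb; exact: H.
Qed.

Lemma roots_count n (S : profile n) u beta :
  (beta * #|[set r | lg S u beta r && (r == rt S u r)]| <= #|[set y | lg S u beta y]|)%N.
Proof.
have sym := ep_connect_sym S u.
set LR := [set r | _]; set A := [set y | _].
rewrite mulnC -sum_nat_const.
apply: (@leq_trans (\sum_(r in LR) #|cmp S u r|)).
  apply: leq_sum => r; rewrite inE => /andP[/andP[_ H] _]; exact: ltnW.
apply: (@leq_trans (\sum_(r : 'I_n) \sum_(x : 'I_n) ((r \in LR) && (x \in cmp S u r) : nat))).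
  rewrite big_mkcond /=; apply: leq_sum => r _; case: (r \in LR) => //=.
  by rewrite sum_bool_card.
rewrite exchange_big /= -sum1_card [X in (_ <= X)%N]big_mkcond; apply: leq_sum => x _.
case: ifP => xA /=.
  apply: sum_le1 => a b /andP[]; rewrite !inE => /andP[_ /eqP Ha] Hax /andP[/andP[_ /eqP Hb] Hbx].
  by rewrite Ha Hb; apply: rt_eq; apply: connect_trans Hax _; rewrite sym.
rewrite big1 // => r _; apply/eqP; rewrite eqb0; apply/negP => /andP[].
rewrite !inE => /andP[/andP[ru Hr] _] Hrx; move: xA; rewrite inE /lg.
by rewrite (connect_ep_neq Hrx ru) -(comp_eq Hrx) Hr.
Qed.

Lemma Dcount n (S : profile n) u beta :
  (\sum_(i < beta) #|Dset S u beta i| <= 2 * #|[set y | lg S u beta y]|)%N.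
Proof.
set LR := [set r | lg S u beta r && (r == rt S u r)]; set A := [set y | _].
apply: (@leq_trans (#|A| + beta * #|LR|)); last first.
  by have := roots_count S u beta; rewrite -/LR -/A; lia.
under eq_bigr do rewrite -sum1_card big_mkcond.
rewrite exchange_big /= -!sum1_card [\sum_(_ in A) _]big_mkcond [\sum_(_ in LR) _]big_mkcond.
rewrite big_distrr -big_split /=.
apply: leq_sum => y _; rewrite /Dset.
case: (boolP (lg S u beta y)) => Hy /=; last first.
  by rewrite big1 // => i _; rewrite inE (negPf Hy).
case: (boolP (y == rt S u y)) => Hr.
  rewrite !inE Hy Hr /= muln1; apply: (@leq_trans (\sum_(i < beta) 1)); last by rewrite sum_nat_const card_ord muln1; lia.
  by apply: leq_sum => i _; case: (_ \in _).
rewrite !inE Hy (negPf Hr) /= muln0 addn0.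
rewrite (eq_bigr (fun i : 'I_beta => (lvl S u y %% beta == i : nat))); last first.
  by move=> i _; rewrite inE Hy (negPf Hr) /=; case: (_ == _).
apply: sum_le1 => a b /eqP Ha /eqP Hb.
by apply: val_inj => /=; rewrite -Ha -Hb.
Qed.
Local Open Scope ring_scope.

Lemma remove_sub n (S : profile n) u v x y :
  remove_edge (adj S) u v x y -> adj (deviate S u (S u :\ v)) x y.
Proof.
rewrite /remove_edge /adj => /andP[/andP[xy H] Hne]; rewrite xy /=.
case: (eqVneq x u) => [exu|xu].
  subst x; rewrite deviate_self deviate_other 1?eq_sym // in_setD1.
  move: Hne; rewrite eqxx /= => Hne.
  have yv : y != v by apply: contra Hne => ->.
  by rewrite yv.
case: (eqVneq y u) => [eyu|yu].
  subst y; rewrite deviate_self deviate_other // in_setD1.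
  move: Hne; rewrite eqxx /= andbT orbC => Hne.
  have xv : x != v by apply: contra Hne => ->.
  by rewrite xv.
by rewrite !deviate_other.
Qed.

Lemma far_le (R : realFieldType) n (w : 'I_n -> R) (B B' : {set 'I_n}) :
  (forall x, 0 <= w x) -> {subset B <= B'} ->
  \sum_(v | v \notin B') w v <= \sum_(v | v \notin B) w v.
Proof.
move=> w0 sub; rewrite [X in X <= _]big_mkcond [X in _ <= X]big_mkcond /=.
apply: ler_sum => x _; case: (boolP (x \in B')) => HB' /=.
  by case: ifP.
have -> : x \notin B by apply: contra HB'; exact: sub.
by [].
Qed.

Lemma cost_dev (R : realFieldType) n (w : 'I_n -> R) alpha beta (S : profile n) u T :
  cost w alpha beta (deviate S u T) u =
  alpha * (#|T|)%:R + \sum_(v | v \notin ball (deviate S u T) beta u) w v.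
Proof. by rewrite /cost deviate_self. Qed.

Lemma no_small (R : realFieldType) n (w : 'I_n -> R) alpha beta (S : profile n) u v :
  (forall x, 0 < w x) -> 0 < alpha -> nash w alpha beta S -> two_edge_connected (adj S) ->
  v \in S u -> lg S u beta v.
Proof.
move=> w0 a0 [val Hn] [_ H2] vS.
have vu : v != u by apply: contraTneq vS => ->; move/forallP: val; apply.
rewrite /lg vu /=; rewrite ltnNge; apply/negP => Hsmall.
set S' := deviate S u (S u :\ v).
have uT : u \notin S u :\ v by rewrite in_setD1 negb_and; move/forallP: val => ->; rewrite orbT.
have Hc := Hn u _ uT; rewrite -/S' cost_dev in Hc.
have Hsub : {subset ball S beta u <= ball S' beta u}.
  move=> x; rewrite !ballE => Hx.
  case: (boolP (x \in cmp S u v)) => xA.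
    have xu : x != u by move: xA; rewrite inE => /connect_ep_neq; apply.
    have Huv : adj S u v by rewrite /adj eq_sym vu vS.
    have Hcon : connect (adj S') u x.
      apply: (connect_sub (e := remove_edge (adj S) u v)) (H2 u v Huv u x).
      by move=> a b /remove_sub /connect1.
    have := path_lemma xu Hcon.
    have -> : cmp S' u x = cmp S u v.
      rewrite (comp_eq (S := S) (u := u) (a := v) (b := x)); last by move: xA; rewrite inE.
      apply/setP => t; rewrite !inE; apply: eq_connect; apply: ep_eq => y yu.
      by rewrite /S' deviate_other.
    by move/ballr_mono; apply.
  apply: (outside_lemma (A := cmp S u v)) Hx xA.
  - by rewrite inE; apply/negP => /connect_ep_neq /(_ vu); rewrite eqxx.
  - move=> y z; rewrite !inE => Hy Hyz; exact: connect_trans Hy (connect1 Hyz).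
  - by move=> y yu; rewrite /S' deviate_other.
  - move=> y yA; rewrite /S' deviate_self in_setD1.
    have -> : y != v by apply: contraNneq yA => ->; rewrite inE connect0.
    by [].
have Hf := far_le (fun x => ltW (w0 x)) Hsub.
move: Hc; rewrite /cost.
have := cardsD1 v (S u); rewrite vS /= => ->.
rewrite natrD mulrDr mulr1 => Hc.
have : alpha <= 0 by lra.
by rewrite leNgt a0.
Qed.

Lemma lg_closed n (S : profile n) u beta y z :
  y \in [set x | lg S u beta x] -> ep S u y z -> z \in [set x | lg S u beta x].
Proof.
rewrite !inE /lg => /andP[yu Hy] Hyz.
have Hc := connect1 Hyz.
by rewrite (connect_ep_neq Hc yu) -(comp_eq Hc) Hy.
Qed.

Lemma lg_neq n (S : profile n) u beta y : lg S u beta y -> y != u.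
Proof. by case/andP. Qed.

Lemma per_player (R : realFieldType) n (w : 'I_n -> R) alpha beta (S : profile n) u :
  (forall x, 0 < w x) -> 0 < alpha -> (0 < beta)%N -> nash w alpha beta S ->
  two_edge_connected (adj S) ->
  (beta%:R) * cost w alpha beta S u <= alpha * (2 * n)%:R.
Proof.
move=> w0 a0 b0 [val Hn] H2.
have Hns : forall v, v \in S u -> lg S u beta v.
  by move=> v; apply: no_small w0 a0 (conj val Hn) H2.
have Hi : forall i : 'I_beta, cost w alpha beta S u <= alpha * (#|Dset S u beta i|)%:R.
  move=> i.
  have uD : u \notin Dset S u beta i by rewrite inE /lg eqxx.
  apply: le_trans (Hn u _ uD) _; rewrite cost_dev.
  set S' := deviate S u (Dset S u beta i).
  rewrite big_pred0 ?addr0 // => x; apply/negbTE; rewrite negbK ballE.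
  case: (eqVneq x u) => [->|xu]; first exact: ballr_self.
  have epE : ep S' u =2 ep S u by apply: ep_eq => y yu; rewrite /S' deviate_other.
  case: (boolP (lg S u beta x)) => Hx.
    have [y Hy Hxy] := cover_lemma (ltn_ord i) Hx.
    have Hy1 : y \in ballr (adj S') 1 u.
      apply: (ballr_step (x := u)) => /=; first by rewrite set11.
      rewrite /adj /S' deviate_self Hy.
      by move: Hy; rewrite inE => /andP[/lg_neq]; rewrite eq_sym => ->.
    have Hxy' : x \in ballr (adj S') beta.-1 y.
      apply: (ballr_sub (e := ep S' u)); first exact: ep_sub.
      by apply: (ballr_sub (e := ep S u)) Hxy => a b; rewrite epE.
    have := ballr_trans Hy1 Hxy'; rewrite add1n prednK //.
  have Hc : connect (adj S) u x by case: H2 => Hc _; exact: Hc.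
  have Hb : x \in ballr (adj S) beta u.
    apply: ballr_mono (path_lemma xu Hc).
    by move: Hx; rewrite /lg xu /= -leqNgt.
  apply: (outside_lemma (A := [set y | lg S u beta y])) Hb _.
  - by rewrite inE /lg eqxx.
  - exact: lg_closed.
  - by move=> y yu; rewrite /S' deviate_other.
  - move=> y; rewrite inE => Hy; rewrite /S' deviate_self inE (negPf Hy) /=.
    by apply/esym/negP => /Hns; rewrite (negPf Hy).
  - by rewrite inE.
have Hsum : \sum_(i < beta) cost w alpha beta S u <= \sum_(i < beta) alpha * (#|Dset S u beta i|)%:R by apply: ler_sum => i _; exact: Hi.
rewrite sumr_const card_ord -big_distrr /= -natr_sum in Hsum.
rewrite mulr_natl; apply: le_trans Hsum _.
apply: ler_wpM2l; first exact: ltW.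
rewrite ler_nat; apply: leq_trans (Dcount S u beta) _.
have := max_card (mem [set y | lg S u beta y]); rewrite card_ord => H; rewrite leq_mul2l; apply/orP; right; exact: H.
Qed.

Definition iso n (P : profile n) x := [forall y, ~~ adj P x y].

Lemma ball_iso n (P : profile n) k v u :
  u \in ballr (adj P) k v -> u != v -> ~~ iso P u && ~~ iso P v.
Proof.
elim: k u => [|k IH] u /=; first by rewrite inE => /eqP ->; rewrite eqxx.
rewrite in_setU => /orP[/IH //|]; rewrite inE => /existsP[y /andP[Hy Hyu]] uv.
have -> : ~~ iso P u by apply/forallPn; exists y; rewrite negbK adj_sym.
case: (eqVneq y v) => [eyv|yv].
  by apply/forallPn; exists u; rewrite negbK -eyv.
by case/andP: (IH y Hy yv).
Qed.

Lemma edges_bound n (P : profile n) :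
  (n - #|[set x | iso P x]| <= 2 * \sum_x #|P x|)%N.
Proof.
have E : (n - #|[set x | iso P x]| = #|[set x | ~~ iso P x]|)%N.
  have := cardsC [set x | iso P x]; rewrite card_ord.
  have -> : ~: [set x | iso P x] = [set x | ~~ iso P x] by apply/setP => x; rewrite !inE.
  lia.
rewrite E -sum1_card big_mkcond /=.
have D : (\sum_x #|P x| = \sum_(x : 'I_n) \sum_(y : 'I_n) (x \in P y : nat))%N.
  rewrite exchange_big /=; apply: eq_bigr => y _; by rewrite sum_bool_card.
rewrite mul2n -addnn {2}D -big_split /=; apply: leq_sum => x _.
rewrite inE; case: (boolP (iso P x)) => //= /forallPn [y]; rewrite negbK /adj => /andP[_ /orP[H|H]].
  have : (0 < #|P x|)%N by rewrite card_gt0; apply/set0Pn; exists y.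
  by move=> h; apply: leq_trans h (leq_addr _ _).
rewrite (bigD1 y) //= H; by rewrite addnCA.
Qed.

Lemma far_bound (R : realFieldType) n (w : 'I_n -> R) beta (P : profile n) :
  (forall x, 0 <= w x) ->
  (\sum_x w x) * ((#|[set x | iso P x]|)%:R - 1) <=
  \sum_v \sum_(u | u \notin ball P beta v) w u.
Proof.
move=> w0.
set I := [set x | iso P x].
pose cnd u v := (v != u) && ((u \in I) || (v \in I)).
apply: (@le_trans _ _ (\sum_v \sum_u (if cnd u v then w u else 0))); last first.
  apply: ler_sum => v _; rewrite [X in _ <= X]big_mkcond /=; apply: ler_sum => u _.
  case: ifP => Hc; last by case: ifP.
  have -> : u \notin ball P beta v.
    rewrite ballE; apply/negP => Hb; move: Hc; rewrite /cnd => /andP[vu].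
    have := ball_iso Hb; rewrite eq_sym => /(_ vu) /andP[Hu Hv].
    by rewrite !inE (negPf Hu) (negPf Hv).
  by [].
rewrite exchange_big /= big_distrl /=; apply: ler_sum => u _.
rewrite -big_mkcond /= sumr_const -[w u *+ _]mulr_natr; apply: ler_wpM2l => //.
have Hsub : (I :\ u) \subset [set v | cnd u v].
  apply/subsetP => v; rewrite /cnd !inE => /andP[-> ->]; by rewrite orbT.
have := subset_leq_card Hsub; have := cardsD1 u I => E.
rewrite lerBlDr natr1 ler_nat.
have -> : #|[pred v | cnd u v]| = #|[set v | cnd u v]| by apply: eq_card => v; rewrite inE.
rewrite E => H; apply: leq_trans (leq_add (leq_b1 _) H) _; by rewrite add1n.
Qed.

Lemma lower_bound (R : realFieldType) n (w : 'I_n -> R) alpha beta (P : profile n) :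
  (forall x, 0 <= w x) -> 0 < alpha -> alpha <= \sum_x w x ->
  alpha * (n%:R - 1) <= 3 * social_cost w alpha beta P.
Proof.
move=> w0 a0 aW.
set k := #|[set x | iso P x]|.
have Hk : (k <= n)%N by have := max_card (mem [set x | iso P x]); rewrite card_ord.
have F0 : forall v, 0 <= \sum_(u | u \notin ball P beta v) w u by move=> v; apply: sumr_ge0.
have S1 : alpha * (\sum_x #|P x|)%:R + \sum_v \sum_(u | u \notin ball P beta v) w u
          = social_cost w alpha beta P.
  by rewrite /social_cost /cost big_split /= natr_sum big_distrr.
have E1 : alpha * (n - k)%:R <= 2 * (alpha * (\sum_x #|P x|)%:R).
  rewrite mulrCA -natrM; apply: ler_wpM2l; first exact: ltW.
  by rewrite ler_nat; apply: edges_bound.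
have E2 := far_bound beta P w0.
have Fs : 0 <= \sum_v \sum_(u | u \notin ball P beta v) w u by apply: sumr_ge0.
have Ps : 0 <= alpha * (\sum_x #|P x|)%:R by apply: mulr_ge0 => //; exact: ltW.
rewrite -S1; rewrite natrB // in E1.
case: (posnP k) => [k0|kpos].
  rewrite k0 subr0 in E1; lra.
have Hk1 : 1 <= k%:R :> R by rewrite ler1n.
have : alpha * (k%:R - 1) <= (\sum_x w x) * (k%:R - 1) by apply: ler_wpM2r; lra.
move: E2; rewrite -/k; nra.
Qed.

Lemma alpha_le_W (R : realFieldType) n (w : 'I_n -> R) alpha beta (S : profile n) :
  (forall x, 0 < w x) -> 0 < alpha -> (1 < n)%N -> nash w alpha beta S -> connected_rel (adj S) ->
  alpha <= \sum_x w x.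
Proof.
move=> w0 a0 n1 [val Hn] Hc.
pose a : 'I_n := Ordinal (ltnW n1); pose b : 'I_n := Ordinal n1.
have ab : a != b by [].
have [x Hx] : exists x, (0 < #|S x|)%N.
  have := Hc a b; move/connectP => [p Hp Hb].
  case: p Hp Hb => [|y p] /=; first by move=> _ Eb; move: ab; rewrite Eb eqxx.
  move=> /andP[/andP[_ /orP[H|H]] _] _.
    by exists a; rewrite card_gt0; apply/set0Pn; exists y.
  by exists y; rewrite card_gt0; apply/set0Pn; exists a.
have Hd := Hn x set0 (negbT (in_set0 x)).
rewrite /cost deviate_self cards0 mulr0 add0r in Hd.
have H1 : \sum_(v | v \notin ball (deviate S x set0) beta x) w v <= \sum_v w v.
  rewrite [X in _ <= X](bigID (fun v => v \notin ball (deviate S x set0) beta x)) /= lerDl.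
  by apply: sumr_ge0 => v _; apply: ltW.
have H2 : 0 <= \sum_(v | v \notin ball S beta x) w v by apply: sumr_ge0 => v _; apply: ltW.
have H3 : alpha <= alpha * (#|S x|)%:R.
  have k1 : 1 <= (#|S x|)%:R :> R by rewrite ler1n.
  nra.
lra.
Qed.

Theorem proposition8 (R : realFieldType) :
  exists c : R, 0 < c /\
  forall (n : nat) (w : 'I_n -> R) (alpha : R) (beta : nat),
    (forall u, 0 < w u) -> 0 < alpha ->
    (1 <= beta)%N -> (beta <= n.-1)%N -> (1 < beta)%N ->
    (exists S0 : profile n, nash w alpha beta S0 /\ two_edge_connected (adj S0)) ->
    forall S : profile n, nash w alpha beta S -> two_edge_connected (adj S) ->
      social_cost w alpha beta S / opt w alpha beta <= c * n%:R / beta%:R.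
Proof.
exists 12; split; first by [].
move=> n w alpha beta w0 a0 b1 bn b2 _ S HS H2.
have n3 : (2 < n)%N by lia.
have w0' : forall x, 0 <= w x by move=> x; apply: ltW.
have aW := alpha_le_W w0 a0 (ltnW n3) HS H2.1.
have Lopt : alpha * (n%:R - 1) <= 3 * opt w alpha beta.
  rewrite /opt; apply: (big_ind (fun x => alpha * (n%:R - 1) <= 3 * x)).
  - exact: lower_bound.
  - by move=> x y Hx Hy; case: (leP x y).
  - move=> P _; exact: lower_bound.
have Hsoc : beta%:R * social_cost w alpha beta S <= n%:R * (alpha * (2 * n)%:R).
  have H : \sum_(u : 'I_n) beta%:R * cost w alpha beta S u <= \sum_(u : 'I_n) alpha * (2 * n)%:R.
    apply: ler_sum => u _; apply: per_player => //; lia.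
  by rewrite -mulr_sumr sumr_const card_ord in H; rewrite /social_cost [X in _ <= X]mulr_natl.
have N3 : 3 <= n%:R :> R by rewrite (ler_nat R 3 n).
have B0 : 0 < beta%:R :> R by rewrite ltr0n; lia.
have O0 : 0 < opt w alpha beta by nra.
rewrite ler_pdivrMr // mulrAC ler_pdivlMr //.
rewrite natrM in Hsoc.
nra.
Qed.
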